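(* Let $n\ge 2$ be an integer, $A\subseteq L_n$, and let $B\subseteq L_n\setminus A$ be a closed uncountable subset of $(L_n,\tau_E|_{L_n})$. Then $(X_n,\tau(A))$ is neither normal nor countably paracompact.
   Context: For $\overline{x},\overline{a}\in\mathbb R^n$ let $|\overline{x}-\overline{a}|$ be the Euclidean distance and $B(\overline{a},\epsilon)=\{\overline{x}\in\mathbb R^n:|\overline{x}-\overline{a}|<\epsilon\}$. Let $P_n=\{\overline{x}\in\mathbb R^n: x_n>0\}$, $L_n=\{\overline{x}\in\mathbb R^n: x_n=0\}$, $X_n=P_n\cup L_n$, and let $\tau_E$ denote the Euclidean topology on $X_n$. For $\overline{a}\in L_n$ and $\epsilon>0$ put $\overline{a(\epsilon)}=(a_1,\dots,a_{n-1},\epsilon)$ and $\tilde B(\overline{a},\epsilon)=\{\overline{a}\}\cup B(\overline{a(\epsilon)},\epsilon)$. For $A\subseteq L_n$, the topology $\tau(A)$ on $X_n$ is generated by the local bases: at $\overline{a}\in P_n$, the sets $B(\overline{a},\epsilon)$ with $0<\epsilon<a_n$; at $\overline{a}\in A$, the sets $B(\overline{a},\epsilon)\cap X_n$ with $\epsilon>0$; at $\overline{a}\in L_n\setminus A$, the sets $\tilde B(\overline{a},\epsilon)$ with $\epsilon>0$. *)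

(* Defs.v *)
From HB Require Import structures.
From mathcomp Require Import all_boot all_order all_algebra.
From mathcomp Require Import all_classical all_reals.
Set Implicit Arguments. Unset Strict Implicit. Unset Printing Implicit Defensive.
Import Order.TTheory GRing.Theory Num.Theory.
Local Open Scope classical_set_scope.
Local Open Scope ring_scope.

Section Defs.
Variables (R : realType) (m : nat).
(* Points of R^(m+1); the last coordinate x_n is x ord_max. *)
Definition pt := 'I_m.+1 -> R.

Definition edist (x a : pt) : R := Num.sqrt (\sum_i (x i - a i) ^+ 2).
Definition eball (a : pt) (e : R) : set pt := [set x | edist x a < e].

Definition Pn : set pt := [set x | 0 < x ord_max].
Definition Ln : set pt := [set x | x ord_max = 0].
Definition Xn : set pt := Pn `|` Ln.

Definition a_eps (a : pt) (e : R) : pt := fun i => if i == ord_max then e else a i.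
Definition tball (a : pt) (e : R) : set pt := [set a] `|` eball (a_eps a e) e.

Definition basic_nbhd (A : set pt) (a : pt) (U : set pt) : Prop :=
  [\/ Pn a /\ exists e : R, [/\ 0 < e, e < a ord_max & U = eball a e],
      A a /\ exists e : R, 0 < e /\ U = eball a e `&` Xn
    | Ln a /\ ~ A a /\ exists e : R, 0 < e /\ U = tball a e].

Definition tau_open (A : set pt) (U : set pt) : Prop :=
  U `<=` Xn /\ forall x, U x -> exists V, basic_nbhd A x V /\ V `<=` U.

Definition tau_closed (A : set pt) (F : set pt) : Prop :=
  F `<=` Xn /\ tau_open A (Xn `\` F).

Definition tau_normal (A : set pt) : Prop :=
  forall F G, tau_closed A F -> tau_closed A G -> F `&` G = set0 ->
  exists U V, [/\ tau_open A U, tau_open A V, F `<=` U, G `<=` V & U `&` V = set0].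

Definition tau_countably_paracompact (A : set pt) : Prop :=
  forall U : nat -> set pt, (forall k, tau_open A (U k)) ->
  Xn `<=` \bigcup_k U k ->
  exists Vs : set (set pt),
    [/\ forall V, Vs V -> tau_open A V /\ exists k, V `<=` U k,
        Xn `<=` \bigcup_(V in Vs) V
      & forall x, Xn x -> exists W, [/\ tau_open A W, W x &
          finite_set [set V | Vs V /\ V `&` W !=set0]]].

Definition euclid_closed_in_Ln (B : set pt) : Prop :=
  B `<=` Ln /\
  forall x, Ln x -> (forall e : R, 0 < e -> exists2 b, B b & edist x b < e) -> B x.
End Defs.

(* Main.v *)
From HB Require Import structures.
Require Import Defs.
From mathcomp Require Import all_boot all_order all_algebra.
From mathcomp Require Import all_classical all_reals.
From mathcomp Require Import lra ring.

Module Helpers.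
Set Implicit Arguments. Unset Strict Implicit. Unset Printing Implicit Defensive.
Import Order.TTheory GRing.Theory Num.Theory.
Local Open Scope classical_set_scope.
Local Open Scope ring_scope.

Section Metric.
Variables (R : realType) (m : nat).
Local Notation pt := (pt R m).
Local Notation edist := (@edist R m).

Definition sq (x a : pt) : R := \sum_i (x i - a i) ^+ 2.

Lemma sq_ge0 x a : 0 <= sq x a.
Proof. by apply: sumr_ge0 => i _; rewrite sqr_ge0. Qed.

Lemma edist_ge0 x a : 0 <= edist x a.
Proof. exact: sqrtr_ge0. Qed.

Lemma edist_sq x a : edist x a ^+ 2 = sq x a.
Proof. by rewrite /edist sqr_sqrtr // sq_ge0. Qed.

Lemma sq_sym x a : sq x a = sq a x.
Proof. by apply: eq_bigr => i _; rewrite -sqrrN opprB. Qed.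

Lemma edist_sym x a : edist x a = edist a x.
Proof. by rewrite /edist -/(sq x a) -/(sq a x) sq_sym. Qed.

Lemma edist_lt x a e : 0 < e -> (edist x a < e) <-> (sq x a < e ^+ 2).
Proof.
move=> e0; rewrite -edist_sq; have := edist_ge0 x a => h.
split => H; first by nra.
by rewrite ltNge; apply/negP => H2; nra.
Qed.

Lemma sq_xx x : sq x x = 0.
Proof. by rewrite /sq big1 // => i _; rewrite subrr expr0n. Qed.

Lemma edist_xx x : edist x x = 0.
Proof. by rewrite /edist -/(sq x x) sq_xx sqrtr0. Qed.

Lemma coord_sq x a i : (x i - a i) ^+ 2 <= sq x a.
Proof.
rewrite /sq (bigD1 i) //= lerDl; apply: sumr_ge0 => j _; exact: sqr_ge0.
Qed.

Lemma coord_le x a i : `|x i - a i| <= edist x a.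
Proof.
rewrite -sqrtr_sqr /edist -/(sq x a) ler_sqrt ?sq_ge0 //; exact: coord_sq.
Qed.

Lemma edist_eq0 x a : edist x a = 0 -> x = a.
Proof.
move=> h; apply: funext => i; apply/eqP; rewrite -subr_eq0 -normr_le0.
by rewrite -h coord_le.
Qed.

Lemma sum_sq_le (I : Type) (r : seq I) (f : I -> R) :
  (forall i, 0 <= f i) -> \sum_(i <- r) f i ^+ 2 <= (\sum_(i <- r) f i) ^+ 2.
Proof.
move=> f0; elim: r => [|j r IH]; first by rewrite !big_nil expr0n.
rewrite !big_cons.
have hS : 0 <= \sum_(i <- r) f i by apply: sumr_ge0.
have := f0 j; nra.
Qed.

Lemma edist_le_sum x a : edist x a <= \sum_i `|x i - a i|.
Proof.
rewrite -[X in _ <= X]ger0_norm ?sumr_ge0 // -sqrtr_sqr /edist ler_sqrt ?sqr_ge0 //.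
rewrite /sq (eq_bigr (fun i => `|x i - a i| ^+ 2)); last by move=> i _; rewrite real_normK // num_real.
exact: sum_sq_le.
Qed.

Lemma cauchy_schwarz (u v : 'I_m.+1 -> R) :
  \sum_i u i * v i <= Num.sqrt (\sum_i u i ^+ 2) * Num.sqrt (\sum_i v i ^+ 2).
Proof.
set a := Num.sqrt _; set b := Num.sqrt _.
have a0 : 0 <= a := sqrtr_ge0 _.
have b0 : 0 <= b := sqrtr_ge0 _.
have Su : 0 <= \sum_i u i ^+ 2 by apply: sumr_ge0 => i _; exact: sqr_ge0.
have Sv : 0 <= \sum_i v i ^+ 2 by apply: sumr_ge0 => i _; exact: sqr_ge0.
have a2 : a ^+ 2 = \sum_i u i ^+ 2 by rewrite sqr_sqrtr.
have b2 : b ^+ 2 = \sum_i v i ^+ 2 by rewrite sqr_sqrtr.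
have [a00|apos] := eqVneq a 0.
  have u0 i : u i = 0.
    apply/eqP; rewrite -sqrf_eq0; apply/eqP.
    apply: (@psumr_eq0P _ _ xpredT (fun i => u i ^+ 2)) => //.
      by move=> j _; exact: sqr_ge0.
    by rewrite -a2 a00 expr0n.
  rewrite big1 ?a00 ?mul0r // => i _; by rewrite u0 mul0r.
have [b00|bpos] := eqVneq b 0.
  have v0 i : v i = 0.
    apply/eqP; rewrite -sqrf_eq0; apply/eqP.
    apply: (@psumr_eq0P _ _ xpredT (fun i => v i ^+ 2)) => //.
      by move=> j _; exact: sqr_ge0.
    by rewrite -b2 b00 expr0n.
  rewrite big1 ?b00 ?mulr0 // => i _; by rewrite v0 mulr0.
have ap : 0 < a by rewrite lt_def apos a0.
have bp : 0 < b by rewrite lt_def bpos b0.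
have key : 2 * a * b * \sum_i u i * v i <= b ^+ 2 * \sum_i u i ^+ 2 + a ^+ 2 * \sum_i v i ^+ 2.
  rewrite !mulr_sumr -big_split /=; apply: ler_sum => i _.
  have := sqr_ge0 (b * u i - a * v i); nra.
rewrite -a2 -b2 in key.
have abp : 0 < a * b by rewrite mulr_gt0.
nra.
Qed.

Lemma edist_triangle x y z : edist x z <= edist x y + edist y z.
Proof.
have h1 := edist_ge0 x y; have h2 := edist_ge0 y z.
rewrite -[X in _ <= X]ger0_norm ?addr_ge0 // -sqrtr_sqr /edist ler_sqrt ?sqr_ge0 //.
rewrite -/(sq x z).
have e1 := edist_sq x y; have e2 := edist_sq y z.
have cs := cauchy_schwarz (fun i => x i - y i) (fun i => y i - z i).
rewrite /= -/(sq x y) -/(sq y z) /edist in cs *.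
rewrite -/(edist x y) -/(edist y z) in cs *.
rewrite -/(sq x y) -/(sq y z) in e1 e2.
have -> : sq x z = sq x y + 2 * \sum_i (x i - y i) * (y i - z i) + sq y z.
  rewrite /sq mulr_sumr -!big_split /=; apply: eq_bigr => i _; ring.
rewrite -e1 -e2; nra.
Qed.

End Metric.


Section Geom.
Variables (R : realType) (m : nat).
Local Notation pt := (pt R m).
Local Notation edist := (@edist R m).
Local Notation sq := (@sq R m).
Local Notation Ln := (@Ln R m).
Local Notation Pn := (@Pn R m).
Local Notation Xn := (@Xn R m).

Lemma Pn_notLn x : Pn x -> ~ Ln x.
Proof. by rewrite /Pn /Ln /= => h h2; rewrite h2 ltxx in h. Qed.

Lemma eball_eps_Pn a e y : 0 < e -> eball (a_eps a e) e y -> Pn y.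
Proof.
move=> e0; rewrite /eball /= => h.
have := coord_le y (a_eps a e) ord_max.
rewrite /a_eps eqxx => h2.
have h3 : `|y ord_max - e| < e by apply: le_lt_trans h.
rewrite /Pn /=; move: h3; rewrite ltr_norml; lra.
Qed.

Lemma tball_Xn a e : Ln a -> 0 < e -> tball a e `<=` Xn.
Proof.
move=> La e0 y [->|h]; first by right.
by left; apply: eball_eps_Pn h.
Qed.

Lemma tball_Ln a e y : 0 < e -> tball a e y -> Ln y -> y = a.
Proof.
move=> e0 [->//|h] Ly; exfalso; exact: (Pn_notLn (eball_eps_Pn e0 h)).
Qed.

Lemma sq_eps b c r s : Ln b -> Ln c ->
  sq (a_eps c s) (a_eps b r) = sq c b + (s - r) ^+ 2.
Proof.
move=> Lb Lc.
rewrite /sq (eq_bigr (fun i => (c i - b i) ^+ 2 + (if i == ord_max then (s - r) ^+ 2 else 0))).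
  by rewrite big_split /= -big_mkcond big_pred1_eq.
move=> i _; rewrite /a_eps; case: eqP => [->|_]; last by rewrite addr0.
by rewrite Lb Lc subrr expr0n add0r.
Qed.

Lemma tball_meet b c r s : Ln b -> Ln c -> 0 < r -> 0 < s ->
  sq b c < 4 * r * s ->
  exists p, eball (a_eps b r) r p /\ eball (a_eps c s) s p.
Proof.
move=> Lb Lc r0 s0 h.
set Bc := a_eps b r; set Cc := a_eps c s.
have rs0 : 0 < r + s by lra.
have rsn : r + s != 0 by rewrite gt_eqF.
exists (fun i => (s * Bc i + r * Cc i) / (r + s)).
have hS := sq_eps r s Lb Lc; rewrite -/Bc -/Cc in hS.
have hS' := sq_eps s r Lc Lb; rewrite -/Bc -/Cc in hS'.
have sqcb : sq c b = sq b c by rewrite sq_sym.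
have q0 := sq_ge0 b c.
split.
- rewrite /eball /= edist_lt //.
  have -> : sq (fun i => (s * Bc i + r * Cc i) / (r + s)) Bc
          = (r / (r + s)) ^+ 2 * sq Cc Bc.
    rewrite /sq mulr_sumr; apply: eq_bigr => i _.
    by rewrite -exprMn; congr (_ ^+ 2); field.
  rewrite hS sqcb.
  set k := r / (r + s).
  have k0 : 0 < k by rewrite divr_gt0.
  have kr : k * (r + s) = r by rewrite /k divfK.
  have : k ^+ 2 * (sq b c + (s - r) ^+ 2) < k ^+ 2 * (4 * r * s + (s - r) ^+ 2).
    by rewrite ltr_pM2l ?exprn_gt0 // ltrD2r.
  have -> : k ^+ 2 * (4 * r * s + (s - r) ^+ 2) = (k * (r + s)) ^+ 2 by ring.
  by rewrite kr.
- rewrite /eball /= edist_lt //.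
  have -> : sq (fun i => (s * Bc i + r * Cc i) / (r + s)) Cc
          = (s / (r + s)) ^+ 2 * sq Bc Cc.
    rewrite /sq mulr_sumr; apply: eq_bigr => i _.
    by rewrite -exprMn; congr (_ ^+ 2); field.
  rewrite hS'.
  set k := s / (r + s).
  have k0 : 0 < k by rewrite divr_gt0.
  have kr : k * (r + s) = s by rewrite /k divfK.
  have : k ^+ 2 * (sq b c + (r - s) ^+ 2) < k ^+ 2 * (4 * r * s + (r - s) ^+ 2).
    by rewrite ltr_pM2l ?exprn_gt0 // ltrD2r.
  have -> : k ^+ 2 * (4 * r * s + (r - s) ^+ 2) = (k * (r + s)) ^+ 2 by ring.
  by rewrite kr.
Qed.

End Geom.


Section Topo.
Variables (R : realType) (m : nat).
Local Notation pt := (pt R m).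
Local Notation edist := (@edist R m).
Local Notation sq := (@sq R m).
Local Notation Ln := (@Ln R m).
Local Notation Pn := (@Pn R m).
Local Notation Xn := (@Xn R m).
Variables (A B : set pt).
Hypothesis AL : A `<=` Ln.
Hypothesis BLA : B `<=` Ln `\` A.
Hypothesis Bcl : euclid_closed_in_Ln B.

Lemma basic_at_L c V : Ln c -> ~ A c -> basic_nbhd A c V ->
  exists2 e, 0 < e & V = tball c e.
Proof.
move=> Lc nAc [[Pc _]|[Ac _]|[_ [_ [e [e0 ->]]]]].
- by exfalso; exact: Pn_notLn Pc Lc.
- by exfalso; exact: nAc.
- by exists e => //.
Qed.

Lemma open_tball U c : tau_open A U -> U c -> Ln c -> ~ A c ->
  exists2 e, 0 < e & tball c e `<=` U.
Proof.
move=> [_ hU] Uc Lc nAc; have [V [bV VU]] := hU c Uc.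
by have [e e0 eV] := basic_at_L Lc nAc bV; exists e => //; rewrite -eV.
Qed.

Lemma closedB_far x : Ln x -> ~ B x -> exists2 e, 0 < e & forall b, B b -> e <= edist x b.
Proof.
move=> Lx nBx; apply: contrapT => h; apply: nBx; apply: Bcl.2 => // e e0.
apply: contrapT => h2; apply: h; exists e => // b Bb.
by rewrite leNgt; apply/negP => h3; apply: h2; exists b.
Qed.

Lemma open_compl F : F `<=` B -> tau_open A (Xn `\` F).
Proof.
move=> FB; split; first by move=> x [].
move=> x [Xx nFx].
have [Px|Lx] := Xx.
- exists (eball x (x ord_max / 2)); split.
    by apply: Or31; split => //; exists (x ord_max / 2); split => //; rewrite /Pn /= in Px; lra.
  move=> y; rewrite /eball /= => hy.
  have := coord_le y x ord_max => h2.
  have h3 : `|y ord_max - x ord_max| < x ord_max / 2 by apply: le_lt_trans hy.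
  have Py : Pn y by rewrite /Pn /=; move: h3; rewrite ltr_norml /Pn /= in Px *; lra.
  split; first by left.
  by move=> Fy; have [Ly _] := BLA (FB y Fy); exact: Pn_notLn Py Ly.
- have [Ax|nAx] := pselect (A x).
  + have nBx : ~ B x by move=> /BLA [].
    have [e e0 he] := closedB_far Lx nBx.
    exists (eball x e `&` Xn); split; first by apply: Or32; split => //; exists e.
    move=> y [hy Xy]; split => // Fy.
    have := he y (FB y Fy); rewrite edist_sym; rewrite /eball /= in hy; lra.
  + exists (tball x 1); split; first by apply: Or33; split => //; split => //; exists 1.
    move=> y hy; split; first exact: tball_Xn hy.
    move=> Fy; have [Ly _] := BLA (FB y Fy).
    by have ey := tball_Ln ltr01 hy Ly; rewrite ey in Fy.
Qed.

Lemma open_point c : B c -> tau_open A ((Xn `\` B) `|` [set c]).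
Proof.
move=> Bc; have [Lc nAc] := BLA Bc; split.
  by move=> x [[]//|->]; right.
move=> x [hx|->].
- have [_ h] := open_compl (@subset_refl _ B).
  by have [V [bV VU]] := h x hx; exists V; split => // y /VU; left.
- exists (tball c 1); split; first by apply: Or33; split => //; split => //; exists 1.
  move=> y [->|hy]; first by right.
  have Py := eball_eps_Pn ltr01 hy.
  left; split; first by left.
  by move=> /BLA [Ly _]; exact: Pn_notLn Py Ly.
Qed.

End Topo.


Section Baire.
Variables (R : realType) (m : nat).
Local Notation pt := (pt R m).
Local Notation edist := (@edist R m).
Local Notation sq := (@sq R m).
Local Notation Ln := (@Ln R m).

Definition hp (n : nat) : R := (2 ^+ n)^-1.

Lemma hp_gt0 n : 0 < hp n.
Proof. by rewrite /hp invr_gt0 exprn_gt0. Qed.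

Lemma hpS n : hp n.+1 = hp n / 2.
Proof. by rewrite /hp exprSr invfM. Qed.

Lemma hp_small e : 0 < e -> exists n, hp n < e.
Proof.
move=> e0; exists (Num.Def.archi_bound e^-1).
have h := @upper_nthrootP R e^-1 _ (leqnn _).
rewrite /hp -[X in _ < X](invrK e) ltf_pV2 ?posrE ?invr_gt0 ?exprn_gt0 //.
Qed.

Lemma hp_le n k : (n <= k)%N -> hp k <= hp n.
Proof.
move=> nk; rewrite /hp lef_pV2 ?posrE ?exprn_gt0 //.
by rewrite ler_eXn2l // ltr1n.
Qed.

Lemma hp_smallC C e : 0 < C -> 0 < e -> exists n, C * hp n < e.
Proof.
move=> C0 e0; have [n hn] := hp_small (divr_gt0 e0 C0).
by exists n; rewrite mulrC -ltr_pdivlMr.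
Qed.

Lemma mnl (x y : R) : Order.min x y <= x. Proof. by rewrite ge_min lexx. Qed.
Lemma mnr (x y : R) : Order.min x y <= y. Proof. by rewrite ge_min lexx orbT. Qed.

Definition nd (Q G : set pt) := forall p r, Q p -> 0 < r ->
  exists q t, [/\ Q q, 0 < t, eball q t `<=` eball p r & forall y, eball q t y -> ~ G y].

Lemma nd_union Q G1 G2 : nd Q G1 -> nd Q G2 -> nd Q (G1 `|` G2).
Proof.
move=> h1 h2 p r Qp r0.
have [q [t [Qq t0 s1 a1]]] := h1 p r Qp r0.
have [q' [t' [Qq' t0' s2 a2]]] := h2 q t Qq t0.
exists q', t'; split => //; first by move=> y /s2 /s1.
by move=> y hy [/(a1 y (s2 y hy))|/(a2 y hy)].
Qed.

Lemma baire (Q : set pt) (G : nat -> set pt) q0 :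
  euclid_closed_in_Ln Q -> Q q0 -> (forall n, nd Q (G n)) ->
  exists x, Q x /\ forall n, ~ G n x.
Proof.
move=> [QL Qcl] Qq0 hG.
have step : forall z : nat * (pt * R), exists w : pt * R,
   Q z.2.1 -> 0 < z.2.2 -> [/\ Q w.1, 0 < w.2, eball w.1 w.2 `<=` eball z.2.1 z.2.2
        & forall y, eball w.1 w.2 y -> ~ G z.1 y].
  move=> [n [p r]] /=.
  have [[Qp r0]|hn] := pselect (Q p /\ 0 < r).
    by have [q [t H]] := hG n p r Qp r0; exists (q, t).
  by exists (p, r) => Qp r0; exfalso; apply: hn.
have [f hf] := choice step.
pose fix zs n : pt * R := if n is k.+1 then
   ((f (k, zs k)).1, Order.min (f (k, zs k)).2 (zs k).2 / 2) else (q0, 1).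
pose q n := (zs n).1; pose t n := (zs n).2.
have inv : forall n, [/\ Q (q n), 0 < t n & t n <= hp n].
  elim => [|n [Qn tn tnh]]; first by rewrite /q /t /= /hp expr0 invr1.
  have [Q1 t1 s1 a1] := hf (n, zs n) Qn tn.
  rewrite /q /t /=; split => //.
    by rewrite divr_gt0 // lt_min t1 tn.
  rewrite hpS ler_pM2r ?invr_gt0 //; apply: le_trans tnh; exact: mnr.
have nest : forall n, eball (q n.+1) (t n.+1) `<=` eball (q n) (t n).
  move=> n y hy; have [Qn tn _] := inv n.
  have [_ _ s1 _] := hf (n, zs n) Qn tn.
  apply: s1; rewrite /eball /= in hy *; apply: lt_le_trans hy _.
  rewrite /t /= ler_pdivrMr // (le_trans (mnl _ _)) //.
  have := (hf (n, zs n) Qn tn); case => _ w0 _ _; lra.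
have avoid : forall n y, edist y (q n.+1) < 2 * t n.+1 -> ~ G n y.
  move=> n y hy; have [Qn tn _] := inv n.
  have [_ w0 _ a1] := hf (n, zs n) Qn tn.
  apply: a1; rewrite /eball /=; apply: lt_le_trans hy _.
  rewrite /t /= mulrC divfK ?pnatr_eq0 //; exact: mnl.
have nestN : forall n k, eball (q (n + k)%N) (t (n + k)%N) `<=` eball (q n) (t n).
  move=> n; elim => [|k IH]; first by rewrite addn0.
  by rewrite addnS => y /nest /IH.
have qin : forall n k, edist (q (n + k)%N) (q n) < t n.
  move=> n k; apply: (nestN n k); rewrite /eball /= edist_xx.
  by have [] := inv (n + k)%N.
have qc : forall n k i, `|q (n + k)%N i - q n i| < hp n.
  move=> n k i; apply: le_lt_trans (coord_le _ _ i) _.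
  have [_ _ h] := inv n; exact: lt_le_trans (qin n k) h.
pose x : pt := fun i => sup [set q N i - hp N | N in [set: nat]].
have xc : forall n i, `|x i - q n i| <= hp n.
  move=> n i.
  set E := [set q N i - hp N | N in [set: nat]].
  have hE : has_sup E.
    split; first by exists (q 0%N i - hp 0); exists 0%N.
    exists (q 0%N i + 1) => _ [N _ <-].
    have := qc 0%N N i; rewrite add0n /hp expr0 invr1 ltr_norml => /andP[h1 h2].
    have h3 := hp_gt0 N; rewrite /hp in h3.
    clear -h1 h2 h3; lra.
  rewrite ler_norml; apply/andP; split.
    have := sup_upper_bound hE; move=> /(_ (q n i - hp n)) h.
    have : q n i - hp n <= x i by apply: h; exists n.
    lra.
  have : x i <= q n i + hp n.
    apply: ge_sup; first by exists (q 0%N i - hp 0); exists 0%N.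
    move=> _ [N _ <-].
    have [nN|Nn] := leqP n N.
      have := qc n (N - n)%N i; rewrite subnKC // ltr_norml => /andP[? ?].
      have := hp_gt0 N; have := hp_gt0 n; lra.
    have := qc N (n - N)%N i; rewrite subnKC; last exact: ltnW.
    rewrite ltr_norml => /andP[? ?].
    have := hp_gt0 N; have := hp_gt0 n; lra.
  lra.
have xd : forall n, edist x (q n) <= (m.+1)%:R * hp n.
  move=> n; apply: le_trans (edist_le_sum _ _) _.
  apply: (@le_trans _ _ (\sum_(i < m.+1) hp n)).
    by apply: ler_sum => i _; exact: xc.
  by rewrite sumr_const card_ord mulr_natl.
have m0 : 0 < (m.+1)%:R :> R by rewrite ltr0n.
exists x; split.
  apply: Qcl.
    rewrite /Ln /=; apply/eqP; rewrite -normr_le0 leNgt; apply/negP => h.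
    have [n hn] := hp_small h.
    have [Qn _ _] := inv n.
    have := xc n ord_max; rewrite (QL _ Qn) subr0 => h2.
    clear -h2 hn; lra.
  move=> e e0; have [n hn] := hp_smallC m0 e0.
  by exists (q n) => //; [case: (inv n)|apply: le_lt_trans (xd n) _].
move=> n; apply: avoid.
have [_ tn _] := inv n.+1.
have [k hk] := hp_smallC m0 tn.
apply: le_lt_trans (edist_triangle x (q (n.+1 + k)%N) (q n.+1)) _.
have h1 := qin n.+1 k.
have h2 : edist x (q (n.+1 + k)%N) <= (m.+1)%:R * hp k.
  apply: le_trans (xd _) _; rewrite ler_pM2l //; apply: hp_le; exact: leq_addl.
lra.
Qed.

End Baire.


Lemma countableU T (X Y : set T) : countable X -> countable Y -> countable (X `|` Y).
Proof.
move=> cX cY.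
apply: (@sub_countable _ _ _ (\bigcup_(b in [set: bool]) (if b then X else Y))).
  apply: subset_card_le => x [Xx|Yx]; first by exists true.
  by exists false.
apply: bigcup_countable => // -[]//.
Qed.

Section Perfect.
Variables (R : realType) (m : nat).
Local Notation pt := (pt R m).
Local Notation edist := (@edist R m).
Local Notation Ln := (@Ln R m).

Definition RT := ({ffun 'I_m.+1 -> rat} * nat)%type.
Definition ctr (z : RT) : pt := fun i => ratr (z.1 i).
Definition rball (z : RT) := eball (ctr z) (hp R z.2).

Lemma rat_approx (x : pt) d : 0 < d -> exists z : {ffun 'I_m.+1 -> rat},
  edist x (fun i => ratr (z i)) < d.
Proof.
move=> d0.
have m0 : 0 < (m.+2)%:R :> R by rewrite ltr0n.
set dl := d / (m.+2)%:R.
have dl0 : 0 < dl by rewrite divr_gt0.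
have h : forall i : 'I_m.+1, exists q : rat, `|x i - ratr q| < dl.
  move=> i; have [q] := @rat_in_itvoo R (x i - dl) (x i + dl) ltac:(lra).
  rewrite in_itv /= => /andP[h1 h2]; exists q; rewrite ltr_norml.
  apply/andP; split; lra.
have [g hg] := choice h.
exists [ffun i => g i].
apply: le_lt_trans (edist_le_sum _ _) _.
apply: (@le_lt_trans _ _ (\sum_(i < m.+1) dl)).
  by apply: ler_sum => i _; rewrite ffunE; apply: ltW.
rewrite sumr_const card_ord -mulr_natr /dl.
rewrite mulrAC ltr_pdivrMr // ltr_pM2l // ltr_nat //.
Qed.

Lemma rball_small (x : pt) e : 0 < e -> exists z, rball z x /\ rball z `<=` eball x e.
Proof.
move=> e0; have [n hn] := hp_small (divr_gt0 e0 (ltr0Sn R 1)).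
have hn0 := hp_gt0 R n.
have [z hz] := rat_approx x hn0.
exists (z, n); split.
  exact: hz.
move=> y; rewrite /rball /eball /ctr /= => hy.
apply: le_lt_trans (edist_triangle y (fun i => ratr (z i)) x) _.
rewrite (edist_sym _ x); lra.
Qed.

Variable B : set pt.
Hypothesis BL : euclid_closed_in_Ln B.
Hypothesis Bunc : ~ countable B.

Definition Qk := [set x | B x /\ forall e, 0 < e -> ~ countable (B `&` eball x e)].

Lemma BmQ_countable : countable (B `\` Qk).
Proof.
pose D := [set z : RT | countable (B `&` rball z)].
apply: (@sub_countable _ _ _ (\bigcup_(z in D) (B `&` rball z))); last first.
  apply: bigcup_countable => //; exact: countableP.
apply: subset_card_le => b [Bb nQb].
have : exists2 e, 0 < e & countable (B `&` eball b e).
  apply: contrapT => h; apply: nQb; split => // e e0 ce; apply: h; by exists e.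
move=> [e e0 ce]; have [z [zb zs]] := rball_small b e0.
exists z; last by split.
rewrite /D /=; apply: sub_countable ce; apply: subset_card_le.
by move=> y [By /zs]; split.
Qed.

Lemma Qk_ne : exists q0, Qk q0.
Proof.
apply: contrapT => h; apply: Bunc.
have -> : B = B `\` Qk.
  apply/seteqP; split => x; last by case.
  by move=> Bx; split => // Qx; apply: h; exists x.
exact: BmQ_countable.
Qed.

Lemma Qk_sub : Qk `<=` B. Proof. by move=> x []. Qed.

Lemma Qk_closed : euclid_closed_in_Ln Qk.
Proof.
split; first by move=> x [/BL.1].
move=> x Lx h; split.
  apply: BL.2 => // e e0; have [q [Bq _] hq] := h e e0; by exists q.
move=> e e0 ce.
have [q [Bq Hq] hq] := h (e / 2) ltac:(lra).
apply: (Hq (e / 2) ltac:(lra)); apply: sub_countable ce; apply: subset_card_le.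
move=> y [By hy]; split => //; rewrite /eball /= in hy *.
apply: le_lt_trans (edist_triangle y q x) _; rewrite (edist_sym q x); lra.
Qed.

Lemma Qk_perfect x e : Qk x -> 0 < e -> exists y, [/\ Qk y, y <> x & edist y x < e].
Proof.
move=> [Bx Hx] e0; apply: contrapT => h; apply: (Hx e e0).
apply: (@sub_countable _ _ _ ([set x] `|` (B `\` Qk))); last first.
  apply: countableU; [exact: countable1|exact: BmQ_countable].
apply: subset_card_le => y [By hy].
have [Qy|nQy] := pselect (Qk y); last by right.
have [->|nyx] := pselect (y = x); first by left.
by exfalso; apply: h; exists y.
Qed.

Lemma dense_seq q0 : Qk q0 -> exists c : nat -> pt, (forall k, Qk (c k)) /\
  forall x e, Qk x -> 0 < e -> exists k, edist (c k) x < e.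
Proof.
move=> Qq0.
have h : forall z : RT, exists y, Qk y /\ ((exists2 y', Qk y' & rball z y') -> rball z y).
  move=> z; have [[y' Qy' hy']|hn] := pselect (exists2 y', Qk y' & rball z y').
    by exists y'.
  by exists q0; split => // hh; exfalso; apply: hn.
have [g hg] := choice h.
pose z0 : RT := ([ffun => 0%R], 0%N).
pose en (j : nat) : RT := odflt z0 (choice.unpickle j).
exists (fun j => g (en j)); split; first by move=> k; case: (hg (en k)).
move=> x e Qx e0.
have [z [zx zs]] := rball_small x e0.
exists (choice.pickle z); rewrite /en choice.pickleK /=.
have [_ hz] := hg z; apply: zs; apply: hz; by exists x.
Qed.

End Perfect.


Section Core.
Variables (R : realType) (m : nat).
Local Notation pt := (pt R m).
Local Notation edist := (@edist R m).
Local Notation sq := (@sq R m).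
Local Notation Ln := (@Ln R m).

Lemma edist_gt0 x y : x <> y -> 0 < edist x y.
Proof.
move=> nxy; rewrite lt_def edist_ge0 andbT; apply/eqP => h; apply: nxy.
exact: edist_eq0 h.
Qed.

Variables (Q : set pt) (q0 : pt) (c : nat -> pt) (s : nat -> R) (P : pt -> R -> Prop).
Hypothesis Qcl : euclid_closed_in_Ln Q.
Hypothesis Qq0 : Q q0.
Hypothesis Qperf : forall x e, Q x -> 0 < e -> exists y, [/\ Q y, y <> x & edist y x < e].
Hypothesis cQ : forall k, Q (c k).
Hypothesis cdense : forall x e, Q x -> 0 < e -> exists k, edist (c k) x < e.
Hypothesis s0 : forall k, 0 < s k.
Hypothesis hP : forall b, Q b -> (forall k, c k <> b) -> exists2 rho, 0 < rho & P b rho.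

Lemma nd_single n : nd Q [set c n].
Proof.
move=> p r Qp r0.
have [y [Qy ync hy]] : exists y, [/\ Q y, y <> c n & edist y p < r / 2].
  have [->|pnc] := pselect (p = c n); last by exists p; rewrite edist_xx; split => //; lra.
  have [y [Qy ync hy]] := Qperf (cQ n) (divr_gt0 r0 (ltr0Sn R 1)); by exists y.
have d0 : 0 < edist (c n) y by apply: edist_gt0 => h; apply: ync.
exists y, (Order.min (r / 2) (edist (c n) y)); split => //.
- by rewrite lt_min d0 divr_gt0.
- move=> z; rewrite /eball /= => hz.
  have := mnl (r / 2) (edist (c n) y) => h1.
  apply: le_lt_trans (edist_triangle z y p) _; lra.
- move=> z; rewrite /eball /= => hz zc; rewrite zc in hz; move: hz.
  have := mnr (r / 2) (edist (c n) y); lra.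
Qed.

Definition Fn n := [set b | [/\ Q b, (forall k, c k <> b) &
   exists rho, [/\ hp R n <= rho, P b rho &
      forall k, edist b (c k) < hp R n -> 4 * s k * rho <= sq b (c k)]]].

Lemma nd_F n : nd Q (Fn n).
Proof.
move=> p r Qp r0.
have [k hk] := cdense Qp (divr_gt0 r0 (ltr0Sn R 1)).
have hn := hp_gt0 R n; have sk := s0 k.
set t := Order.min (Order.min (r / 2) (hp R n)) (Order.min 1 (2 * s k * hp R n)).
have t1 := mnl (Order.min (r / 2) (hp R n)) (Order.min 1 (2 * s k * hp R n)).
have t2 := mnr (Order.min (r / 2) (hp R n)) (Order.min 1 (2 * s k * hp R n)).
have t3 := mnl (r / 2) (hp R n); have t4 := mnr (r / 2) (hp R n).
have t5 := mnl 1 (2 * s k * hp R n); have t6 := mnr 1 (2 * s k * hp R n).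
rewrite -/t in t1 t2.
have t0 : 0 < t.
  rewrite /t !lt_min divr_gt0 // hn ltr01 /=; rewrite !mulr_gt0 //.
exists (c k), t; split => //.
- move=> z; rewrite /eball /= => hz.
  apply: le_lt_trans (edist_triangle z (c k) p) _; lra.
- move=> b; rewrite /eball /= => hb [_ _ [rho [rh _ H]]].
  have hb' : edist b (c k) < hp R n by lra.
  have := H k hb'.
  have e0 := edist_ge0 b (c k).
  rewrite -edist_sq => h.
  have : edist b (c k) ^+ 2 < t by nra.
  have : 4 * s k * hp R n <= 4 * s k * rho by rewrite ler_pM2l // mulr_gt0.
  have : 0 < s k * hp R n by rewrite mulr_gt0.
  lra.
Qed.

Lemma core : exists b rho, [/\ Q b, (forall k, c k <> b), 0 < rho, P b rho &
  forall d, 0 < d -> exists k, edist b (c k) < d /\ sq b (c k) < 4 * s k * rho].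
Proof.
apply: contrapT => H.
have [x [Qx hx]] := @baire R m Q (fun n => [set c n] `|` Fn n) q0 Qcl Qq0
  (fun n => nd_union (nd_single n) (nd_F n)).
have xc : forall k, c k <> x by move=> k ck; apply: (hx k); left.
have [rho r0 Pr] := hP Qx xc.
have : exists2 d, 0 < d & forall k, edist x (c k) < d -> 4 * s k * rho <= sq x (c k).
  apply: contrapT => h2; apply: H; exists x, rho; split => // d d0.
  apply: contrapT => h3; apply: h2; exists d => // k hk.
  rewrite leNgt; apply/negP => h4; apply: h3; by exists k.
move=> [d d0 Hd].
have md : 0 < Order.min rho d by rewrite lt_min r0 d0.
have [n hn] := hp_small md.
have h1 := mnl rho d; have h2 := mnr rho d.
apply: (hx n); right; split => //; exists rho; split => //.
- lra.
- move=> k hk; apply: Hd; lra.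
Qed.

End Core.


Lemma seq_min (R : realType) (sl : seq R) : exists2 d, 0 < d & forall y, y \in sl -> 0 < y -> d <= y.
Proof.
elim: sl => [|a sl [d d0 hd]]; first by exists 1 => // y; rewrite in_nil.
have [a0|a0] := ltP 0 a.
  exists (Order.min d a); first by rewrite lt_min d0 a0.
  move=> y; rewrite in_cons => /orP[/eqP ->|ys] y0; first exact: mnr.
  exact: le_trans (mnl d a) (hd y ys y0).
exists d => // y; rewrite in_cons => /orP[/eqP ->|ys] y0; last exact: hd.
by exfalso; move: a0; rewrite leNgt y0.
Qed.

Section Main.
Variables (R : realType) (m : nat).
Local Notation pt := (pt R m).
Local Notation edist := (@edist R m).
Local Notation sq := (@sq R m).
Local Notation Ln := (@Ln R m).
Local Notation Pn := (@Pn R m).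
Local Notation Xn := (@Xn R m).
Variables (A B : set pt).
Hypothesis AL : A `<=` Ln.
Hypothesis BLA : B `<=` Ln `\` A.
Hypothesis Bcl : euclid_closed_in_Ln B.
Hypothesis Bunc : ~ countable B.

Lemma main_both : ~ tau_normal A /\ ~ tau_countably_paracompact A.
Proof.
have [q0 Qq0] := Qk_ne Bunc.
set Q := Qk B in Qq0.
have QB : Q `<=` B := @Qk_sub R m B.
have Qcl : euclid_closed_in_Ln Q := Qk_closed Bcl.
have Qperf : forall x e, Q x -> 0 < e -> exists y, [/\ Q y, y <> x & edist y x < e].
  by move=> x e; exact: (@Qk_perfect R m B x e).
have [c [cQ cdense]] := dense_seq Qq0.
set Cs := [set x | exists k, c k = x].
have CsB : Cs `<=` B by move=> x; rewrite /Cs /= => -[k <-]; exact: QB _ (cQ k).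
have BL : forall x, B x -> Ln x by move=> x /BLA [].
have BnA : forall x, B x -> ~ A x by move=> x /BLA [].
split.
- move=> hN.
  have FC : tau_closed A Cs.
    split; last exact: (@open_compl R m A B BLA Bcl Cs CsB).
    by move=> x h; right; apply: BL; apply: CsB.
  have GS : Q `\` Cs `<=` B by move=> x [Qx _]; exact: QB.
  have GC : tau_closed A (Q `\` Cs).
    split; last exact: (@open_compl R m A B BLA Bcl _ GS).
    by move=> x h; right; apply: BL; apply: GS.
  have FG : Cs `&` (Q `\` Cs) = set0.
    by apply/seteqP; split => x // [h1 [_ h2]].
  have [U [V [oU oV FU GV UV]]] := hN Cs (Q `\` Cs) FC GC FG.
  have hs : forall k, exists e, 0 < e /\ tball (c k) e `<=` U.
    move=> k; have Bk := QB _ (cQ k).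
    have [e e0 he] := open_tball oU (FU _ (ex_intro _ k erefl)) (BL _ Bk) (BnA _ Bk).
    by exists e.
  have [s hs'] := choice hs.
  have [b [rho [Qb bc r0 Pb hd]]] := @core R m Q q0 c s (fun b rho => tball b rho `<=` V)
    Qcl Qq0 Qperf cQ cdense (fun k => (hs' k).1)
    ltac:(move=> b Qb bc; have Bb := QB _ Qb;
          have [e e0 he] := open_tball oV (GV b (conj Qb (fun '(ex_intro k h) => bc k h))) (BL _ Bb) (BnA _ Bb);
          by exists e).
  have [k [_ hk]] := hd 1 ltr01.
  have Bk := QB _ (cQ k).
  have [p [p1 p2]] := tball_meet (BL _ (QB _ Qb)) (BL _ Bk) r0 (hs' k).1
    ltac:(by rewrite mulrAC).
  have : (U `&` V) p by split; [apply: (hs' k).2; right|apply: Pb; right].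
  by rewrite UV.
- move=> hP.
  pose U := fun k => if k is j.+1 then (Xn `\` B) `|` [set c j] else Xn `\` Cs.
  have oU : forall k, tau_open A (U k).
    case => [|j] /=; first exact: (@open_compl R m A B BLA Bcl Cs CsB).
    exact: (@open_point R m A B BLA Bcl _ (QB _ (cQ j))).
  have cov : Xn `<=` \bigcup_k U k.
    move=> x Xx; have [[k ck]|nc] := pselect (exists k, c k = x).
      by exists k.+1 => //=; right.
    by exists 0%N => //=; split.
  have [Vs [hVs cov2 lf]] := hP U oU cov.
  have hV : forall k, exists V, Vs V /\ V (c k).
    move=> k; have Xk : Xn (c k) by right; apply: BL; exact: QB _ (cQ k).
    by have [V VV Vc] := cov2 _ Xk; exists V.
  have [Vk hVk] := choice hV.
  have Vuniq : forall k y, Vk k y -> B y -> y = c k.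
    move=> k y Vy By; have [_ [j hj]] := hVs _ (hVk k).1.
    have hc := hj _ (hVk k).2.
    move: j hj hc => [|i] hj hc /=.
      by exfalso; case: hc => _; apply; exists k.
    have hy := hj _ Vy.
    case: hc => [[_ /(_ (QB _ (cQ k)))]//|->].
    by case: hy => [[_ /(_ By)]//|].
  have hs : forall k, exists e, 0 < e /\ tball (c k) e `<=` Vk k.
    move=> k; have Bk := QB _ (cQ k).
    have [e e0 he] := open_tball ((hVs _ (hVk k).1).1) (hVk k).2 (BL _ Bk) (BnA _ Bk).
    by exists e.
  have [s hs'] := choice hs.
  have [b [rho [Qb bc r0 [W [tW fin]] hd]]] := @core R m Q q0 c s
    (fun b rho => exists W, tball b rho `<=` W /\ finite_set [set V | Vs V /\ V `&` W !=set0])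
    Qcl Qq0 Qperf cQ cdense (fun k => (hs' k).1)
    ltac:(move=> b Qb bc; have Bb := QB _ Qb;
          have [W [oW Wb fW]] := lf b (or_intror (BL _ Bb));
          have [e e0 he] := open_tball oW Wb (BL _ Bb) (BnA _ Bb);
          by exists e => //; exists W).
  have hpick : forall V : set pt, exists y, (exists2 y', V y' & B y') -> V y /\ B y.
    move=> V; have [[y' Vy By]|hn] := pselect (exists2 y', V y' & B y'); first by exists y'.
    by exists b => h; exfalso; apply: hn.
  have [pick hpk] := choice hpick.
  set D := [set V | Vs V /\ V `&` W !=set0].
  have finS : finite_set ((fun V => edist b (pick V)) @` D) by apply: finite_image.
  have [sl hsl] := (finite_seqP _).1 finS.
  have [d d0 hdd] := seq_min sl.
  have [k [hk1 hk2]] := hd d d0.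
  have Bk := QB _ (cQ k).
  have [p [p1 p2]] := tball_meet (BL _ (QB _ Qb)) (BL _ Bk) r0 (hs' k).1
    ltac:(by rewrite mulrAC).
  have DV : D (Vk k).
    split; first exact: (hVk k).1.
    by exists p; split; [apply: (hs' k).2; right|apply: tW; right].
  have pk : pick (Vk k) = c k.
    have [h1 h2] := hpk (Vk k) (ex_intro2 _ _ (c k) (hVk k).2 Bk).
    exact: Vuniq.
  have inS : (edist b (c k)) \in sl.
    have : [set` sl] (edist b (c k)) by rewrite -hsl; exists (Vk k) => //; rewrite pk.
    by [].
  have := hdd _ inS (edist_gt0 (fun h => bc k (esym h))).
  by rewrite leNgt hk1.
Qed.

End Main.

End Helpers.

Local Open Scope classical_set_scope.

(* dimension n = n.-1.+1 since n >= 2 *)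
Theorem mainTheorem8 (R : realType) (n : nat) (hn : (2 <= n)%N)
  (A B : set (pt R n.-1)) :
  A `<=` @Ln R n.-1 ->
  B `<=` @Ln R n.-1 `\` A ->
  euclid_closed_in_Ln B ->
  ~ countable B ->
  ~ tau_normal A /\ ~ tau_countably_paracompact A.
Proof.
move=> AL BLA Bcl Bunc.
exact: (@Helpers.main_both R n.-1 A B BLA Bcl Bunc).
Qed.
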